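(* Let $P$ be a connected undirected query graph with at least two vertices, and let $c_P$ be its connected domination number. Then every execution plan of $P$ has at least $c_P$ decomposition units, and there exists an execution plan of $P$ with exactly $c_P$ decomposition units.
   Context: A connected dominating set of $P$ is a set $D\subseteq V_P$ such that every vertex of $P$ is in $D$ or adjacent to a vertex of $D$, and the subgraph induced by $D$ is connected; $c_P$ is the minimum cardinality of a connected dominating set. A decomposition of $P$ is a sequence $(dp_0,\dots,dp_l)$ of subgraphs of $P$ (the decomposition units) such that: (1) the vertex set of each $dp_i$ consists of a pivot vertex $dp_i.piv$ and a non-empty set $dp_i.LF$ of leaf vertices, with $(dp_i.piv,u')\in E_P$ for every $u'\in dp_i.LF$; (2) the edge set of $dp_i$ consists of the edges $(dp_i.piv,u')$ for $u'\in dp_i.LF$ together with all edges of $P$ between two vertices of $dp_i.LF$; (3) $\bigcup_i V_{dp_i}=V_P$, and for $i<j$, $V_{dp_i}\cap dp_j.LF=\emptyset$. Such a decomposition is an execution plan if $dp_i.piv\in \bigcup_{j<i}V_{dp_j}$ for all $i\in[1,l]$. The number of decomposition units of the plan is $l+1$. *)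

(* Defs.v *)
From mathcomp Require Import all_boot.
Set Implicit Arguments. Unset Strict Implicit. Unset Printing Implicit Defensive.

(* A decomposition unit is represented by the pair
   (piv, LF) : T * {set T}; its vertex set is piv |: LF, and its edge set is
   determined by condition (2) (the pivot edges plus all P-edges inside LF),
   so the pair determines the unit. *)

Section Defs.
Variable T : finType.
Variable e : rel T.

Definition simple_graph := symmetric e /\ irreflexive e.
Definition graph_connected := forall x y : T, connect e x y.

Definition is_cds (D : {set T}) : bool :=
  [forall v, (v \in D) || [exists d in D, e v d]] &&
  [forall x in D, forall y in D,
      connect [rel a b | [&& e a b, a \in D & b \in D]] x y].

Definition cds_number : nat :=
  #|[arg min_(D < [set: T] | is_cds D) #|D|]|.

Definition unit_piv (u : T * {set T}) : T := u.1.
Definition unit_LF (u : T * {set T}) : {set T} := u.2.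
Definition unit_V (u : T * {set T}) : {set T} := u.1 |: u.2.

Definition unit_ok (u : T * {set T}) : bool :=
  (unit_LF u != set0) && [forall x in unit_LF u, e (unit_piv u) x].

Definition is_decomposition (p : seq (T * {set T})) : Prop :=
  [/\ p != [::],
      all unit_ok p,
      \bigcup_(u <- p) unit_V u = [set: T] &
      forall (d : T * {set T}) (i j : nat), i < j -> j < size p ->
        unit_V (nth d p i) :&: unit_LF (nth d p j) = set0].

Definition is_execution_plan (p : seq (T * {set T})) : Prop :=
  is_decomposition p /\
  forall (d : T * {set T}) (i : nat), 0 < i -> i < size p ->
    unit_piv (nth d p i) \in \bigcup_(j < i) unit_V (nth d p j).

End Defs.

(* Main.v *)
Require Import Defs.
From mathcomp Require Import all_boot.
Set Implicit Arguments.

Section Proof.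
Variable T : finType.
Variable e : rel T.
Hypothesis esym : symmetric e.
Hypothesis econn : graph_connected e.

Definition Cov (q : seq (T * {set T})) := \bigcup_(u <- q) unit_V u.

Lemma CovP q x : reflect (exists2 u, u \in q & x \in unit_V u) (x \in Cov q).
Proof.
rewrite /Cov; elim: q => [|u q IH].
  by rewrite big_nil inE; constructor => -[].
rewrite big_cons in_setU; apply: (iffP orP).
  case=> [h|/IH [v vq hv]]; first by exists u; rewrite ?mem_head.
  by exists v; rewrite // in_cons vq orbT.
move=> [v]; rewrite in_cons => /orP [/eqP <-|vq] hv; first by left.
by right; apply/IH; exists v.
Qed.

Lemma Cov_nth q d : Cov q = \bigcup_(j < size q) unit_V (nth d q j).
Proof. by rewrite /Cov (big_nth d) big_mkord. Qed.

Lemma Cov_rcons q u : Cov (rcons q u) = Cov q :|: unit_V u.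
Proof. by rewrite /Cov -cats1 big_cat big_seq1. Qed.

Lemma setT_cds : is_cds e [set: T].
Proof.
apply/andP; split; first by apply/forallP => v; rewrite in_setT.
apply/forall_inP => x _; apply/forall_inP => y _.
rewrite (@eq_connect _ _ e); first exact: econn.
by move=> a b /=; rewrite !in_setT !andbT.
Qed.

Lemma cds_min D : is_cds e D -> cds_number e <= #|D|.
Proof.
rewrite /cds_number; case: (arg_minnP (fun D : {set T} => #|D|) setT_cds).
by move=> A _ Hm HD; apply: Hm.
Qed.

Lemma cds_ex : exists2 D, is_cds e D & #|D| = cds_number e.
Proof.
rewrite /cds_number; case: (arg_minnP (fun D : {set T} => #|D|) setT_cds).
by move=> A HA _; exists A.
Qed.

Lemma lower p : is_execution_plan e p -> cds_number e <= size p.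
Proof.
case=> -[pn pok pcov pdisj] ppiv.
case: p pn pok pcov pdisj ppiv => [//|u0 p'] _ pok pcov pdisj ppiv.
set p := u0 :: p' in pok pcov pdisj ppiv *.
set Dp := [set x | x \in map fst p].
have cardD : #|Dp| <= size p.
  by rewrite cardsE -(size_map fst); apply: card_size.
apply: leq_trans cardD; apply: cds_min.
set R := [rel a b | [&& e a b, a \in Dp & b \in Dp]].
have inD i : i < size p -> (nth u0 p i).1 \in Dp.
  by move=> hi; rewrite inE; apply: map_f; apply: mem_nth.
have okn i : i < size p -> unit_ok e (nth u0 p i).
  by move=> hi; apply: (allP pok); apply: mem_nth.
have conn i : i < size p -> connect R (nth u0 p 0).1 (nth u0 p i).1.
  elim/ltn_ind: i => -[|i] IH hi; first exact: connect0.
  have := ppiv u0 i.+1 isT hi => /bigcupP [j _].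
  have hj : j < size p by apply: ltn_trans hi.
  rewrite /unit_V in_setU1 => /orP [/eqP hx|hx].
    by rewrite (_ : (nth u0 p i.+1).1 = (nth u0 p j).1) //; apply: IH.
  apply: connect_trans (IH j (ltn_ord j) hj) (connect1 _).
  rewrite /= inD // (inD i.+1) // andbT.
  have /andP [_ /forall_inP H] := okn j hj; rewrite andbT; exact: H.
have Rsym : connect_sym R.
  apply: sym_connect_sym; move=> a b /=; rewrite esym; case: (e b a) => //=; exact: andbC.
have connx x : x \in Dp -> connect R (nth u0 p 0).1 x.
  rewrite inE => /mapP [u up ->].
  by rewrite -(nth_index u0 up); apply: conn; rewrite index_mem.
apply/andP; split.
  apply/forallP => v; have : v \in Cov p by rewrite /Cov pcov in_setT.
  move=> /CovP [u up]; rewrite /unit_V in_setU1 => /orP [/eqP ->|hv].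
    by rewrite inE map_f.
  apply/orP; right; apply/existsP; exists u.1; rewrite inE map_f //=.
  by rewrite esym; have /andP [_ /forall_inP] := allP pok u up; apply.
apply/forall_inP => x xD; apply/forall_inP => y yD.
by apply: connect_trans (connx y yD); rewrite Rsym; apply: connx.
Qed.


Definition disj (q : seq (T * {set T})) := forall (d : T * {set T}) (i j : nat), i < j -> j < size q ->
        unit_V (nth d q i) :&: unit_LF (nth d q j) = set0.
Definition pivc (q : seq (T * {set T})) := forall (d : T * {set T}) (i : nat), 0 < i -> i < size q ->
    unit_piv (nth d q i) \in \bigcup_(j < i) unit_V (nth d q j).
Definition nbr (q : seq (T * {set T})) := forall u, u \in q -> forall x, e u.1 x -> x \in Cov q.
Definition Inv (D : {set T}) q := [/\ q != [::], all (unit_ok e) q, disj q, pivc q &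
   [/\ uniq (map fst q), {subset map fst q <= D} & nbr q]].
Definition N d := [set x | e d x].

Lemma size_le D q : Inv D q -> size q <= #|D|.
Proof.
case=> _ _ _ _ [u sub _]; rewrite -(size_map fst) -(card_uniqP u).
by apply: subset_leq_card; apply/subsetP.
Qed.

Lemma extend D q d : Inv D q -> d \in D -> d \notin map fst q -> d \in Cov q ->
  N d :\: Cov q != set0 -> Inv D (rcons q (d, N d :\: Cov q)).
Proof.
case=> qn qok qdisj qpiv [qu qsub qnbr] dD dn dC Ln.
set L := N d :\: Cov q.
have Vsub d' i : i < size q -> unit_V (nth d' q i) \subset Cov q.
  by move=> hi; apply/subsetP => x hx; apply/CovP; exists (nth d' q i); rewrite ?mem_nth.
split.
- by case: (q).
- rewrite all_rcons qok andbT /unit_ok /= Ln /=.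
  by apply/forall_inP => x; rewrite !inE => /andP [_].
- move=> d' i j hij; rewrite size_rcons ltnS leq_eqVlt => /orP [/eqP hj|hj].
    rewrite !nth_rcons hj ltnn eqxx (leq_trans hij) ?hj //.
    apply/setP => x; rewrite in_set0 in_setI; apply/negbTE/andP => -[h1 h2].
    have := subsetP (Vsub d' i _) x h1; rewrite -hj => /(_ hij) hC.
    by move: h2; rewrite /unit_LF /L /= !inE hC.
  by rewrite !nth_rcons hj (ltn_trans hij hj); apply: qdisj.
- move=> d' i hi; rewrite size_rcons ltnS leq_eqVlt => /orP [/eqP hj|hj].
    rewrite nth_rcons hj ltnn eqxx.
    under eq_bigr => k _ do rewrite nth_rcons (ltn_ord k).
    by rewrite -Cov_nth.
  under eq_bigr => k _ do rewrite nth_rcons (ltn_trans (ltn_ord k) hj).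
  by rewrite nth_rcons hj; apply: qpiv.
split.
- by rewrite map_rcons rcons_uniq dn.
- by move=> x; rewrite map_rcons mem_rcons in_cons => /orP [/eqP ->|/qsub].
- move=> u; rewrite mem_rcons in_cons Cov_rcons => /orP [/eqP ->|uq] x hx.
    rewrite in_setU /unit_V /= in_setU1.
    by rewrite /L !inE hx andbT; case: (x \in Cov q); rewrite ?orbT.
  by rewrite in_setU (qnbr u uq x hx).
Qed.


Definition canext (D : {set T}) q := [exists d, [&& d \in D, d \notin map fst q, d \in Cov q & N d :\: Cov q != set0]].

Lemma finish D q : is_cds e D -> #|D| = cds_number e -> Inv D q -> ~~ canext D q ->
  exists p, is_execution_plan e p /\ size p = cds_number e.
Proof.
move=> Dcds Dmin I0 Hn; have := I0; case=> qn qok qdisj qpiv [qu qsub qnbr].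
have H' a : a \in D -> a \in Cov q -> forall b, e a b -> b \in Cov q.
  move=> aD aC b eab; case: (boolP (a \in map fst q)) => [/mapP [u uq ha]|an].
    by rewrite ha in eab; exact: qnbr uq _ eab.
  move: Hn; apply: contraNT => hb; apply/existsP; exists a.
  rewrite aD an aC /=; apply/set0Pn; exists b; by rewrite !inE hb eab.
case: q qn qok qdisj qpiv qu qsub qnbr I0 Hn H' => [//|u0 q'] qn qok qdisj qpiv qu qsub qnbr I0 Hn H'.
set q := u0 :: q' in qn qok qdisj qpiv qu qsub qnbr I0 Hn H' *.
have u0D : u0.1 \in D by apply: qsub; rewrite map_f ?mem_head.
have u0C : u0.1 \in Cov q by apply/CovP; exists u0; rewrite ?mem_head // /unit_V setU11.
move/andP: Dcds => [Ddom /forall_inP Dconn].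
have DC x : x \in D -> x \in Cov q.
  move=> xD; have := Dconn _ u0D => /forall_inP /(_ x xD) /connectP [s].
  elim: s (u0.1) u0D u0C => [|b s IH] a aD aC /=; first by move=> _ ->.
  case/andP => /and3P [eab _ bD] pth hl.
  exact: (IH b bD (H' a aD aC b eab) pth hl).
have qcov : Cov q = setT.
  apply/setP => v; rewrite in_setT; have /orP [vD|/existsP [d /andP [dD evd]]] := forallP Ddom v.
    exact: DC.
  by apply: (H' d dD (DC d dD)); rewrite esym.
have plan : is_execution_plan e q by split.
exists q; split => //; apply/eqP; rewrite eqn_leq lower // -Dmin andbT.
exact: size_le I0.
Qed.


Lemma loop D : is_cds e D -> #|D| = cds_number e -> forall n q, #|D| - size q <= n -> Inv D q ->
  exists p, is_execution_plan e p /\ size p = cds_number e.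
Proof.
move=> Dcds Dmin; elim=> [|n IH] q hn I0;
  (case: (boolP (canext D q)); last exact: finish);
  move=> /existsP [d /and4P [dD dn dC Ln]];
  have I1 := extend I0 dD dn dC Ln; have := size_le I1; rewrite size_rcons => hs.
  by move: hn; rewrite leqn0 subn_eq0 => /(leq_trans hs); rewrite ltnn.
apply: (IH _ _ I1); rewrite size_rcons subnS; move: hn.
by case: (#|D| - size q) => //.
Qed.

Lemma start D : is_cds e D -> 1 < #|T| -> irreflexive e -> exists q, Inv D q.
Proof.
move=> Dcds /card_gt1P [x [y [_ _ xy]]] irr.
move/andP: Dcds => [/forallP Ddom _].
have [d0 d0D] : exists2 d0, d0 \in D & True.
  by case/orP: (Ddom x) => [xD|/existsP [d /andP [dD _]]]; [exists x|exists d].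
have [z zn] : exists2 z, z != d0 & True.
  by case: (eqVneq x d0) => [hx|hx]; [exists y; rewrite // -hx eq_sym | exists x].
have [w ew] : exists w, e d0 w.
  move: (econn d0 z) => /connectP [[|b s] /= pth hl]; first by rewrite hl eqxx in zn.
  by exists b; case/andP: pth.
exists [:: (d0, N d0)]; split => //.
- rewrite /= andbT /unit_ok /=; apply/andP; split.
    by apply/set0Pn; exists w; rewrite inE.
  by apply/forall_inP => v; rewrite inE.
- by move=> d i [|j] //.
- by move=> d [|[|i]].
split => //.
- by move=> v; rewrite inE => /eqP ->.
- move=> u; rewrite inE => /eqP -> v ev; rewrite /Cov big_seq1 /unit_V /=.
  by rewrite in_setU1 inE ev orbT.
Qed.

End Proof.

Unset Implicit Arguments.
Theorem theorem1 (T : finType) (e : rel T) :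
  simple_graph e -> graph_connected e -> 1 < #|T| ->
  (forall p, is_execution_plan e p -> cds_number e <= size p) /\
  (exists p, is_execution_plan e p /\ size p = cds_number e).
Proof.
move=> [esym irr] econn hT; split; first exact: lower.
have [D Dcds Dmin] := cds_ex econn.
have [q Iq] := start econn D Dcds hT irr.
exact: (loop esym econn Dcds Dmin _ (leqnn _) Iq).
Qed.
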